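(* Let $X_N\in\mathbb{R}^{N\times M}$ (rows $x_n^\top$), $Y_N\in\mathbb{R}^N$, test vector $x\in\mathbb{R}^M$, $\lambda>0$, $\sigma>0$, and luckiness $w(\theta)=\exp\{-\frac{\lambda}{2\sigma^2}\|\theta\|^2\}$. Let $P_\lambda=(X_N^\top X_N+\lambda I)^{-1}$, $K_\lambda=1+x^\top P_\lambda x$, $\hat\theta_\lambda=P_\lambda X_N^\top Y_N$, and for $y\in\mathbb{R}$ let $\hat\theta_y=\arg\min_\theta\big[\sum_{n=1}^N(y_n-\theta^\top x_n)^2+(y-\theta^\top x)^2+\lambda\|\theta\|^2\big]$. Define $$\hat\mu=\frac{\lambda K_\lambda\,\hat\theta_\lambda^\top P_\lambda x}{1+\lambda x^\top P_\lambda^2x},\quad \hat\sigma^2=\frac{\sigma^2K_\lambda^2}{1+\lambda x^\top P_\lambda^2x},\quad c=\exp\Big\{\frac{1}{2\sigma^2}\Big[\frac{(\lambda\hat\theta_\lambda^\top P_\lambda x)^2}{1+\lambda x^\top P_\lambda^2x}-\lambda\|\hat\theta_\lambda\|^2\Big]\Big\}.$$ Then for all $y\in\mathbb{R}$, $$p_{\hat\theta_y}(y\mid x)\,w(\hat\theta_y)=\frac{c}{\sqrt{2\pi\sigma^2}}\exp\Big\{-\frac{1}{2\hat\sigma^2}\big(y-\hat\theta_\lambda^\top x+\hat\mu\big)^2\Big\}.$$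
   Context: $p_\theta(y\mid x)=\frac{1}{\sqrt{2\pi\sigma^2}}\exp\{-\frac{1}{2\sigma^2}(y-\theta^\top x)^2\}$. *)

(* Defs.v *)
From HB Require Import structures.
From mathcomp Require Import all_boot all_order all_algebra.
From mathcomp Require Import all_classical all_reals all_analysis.
Set Implicit Arguments. Unset Strict Implicit. Unset Printing Implicit Defensive.
Import Order.TTheory GRing.Theory Num.Theory.
Local Open Scope ring_scope.

Section Defs.
Variable R : realType.

Definition dotc (M : nat) (u v : 'cV[R]_M) : R := (u^T *m v) 0 0.

Definition gauss_density (M : nat) (sigma : R) (theta : 'cV[R]_M) (y : R) (x : 'cV[R]_M) : R :=
  (Num.sqrt (2 * pi * sigma ^+ 2))^-1 *
  expR (- ((2 * sigma ^+ 2)^-1 * (y - dotc theta x) ^+ 2)).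

Definition luck (M : nat) (lambda sigma : R) (theta : 'cV[R]_M) : R :=
  expR (- (lambda / (2 * sigma ^+ 2) * dotc theta theta)).

Definition Plam (N M : nat) (X : 'M[R]_(N, M)) (lambda : R) : 'M[R]_M :=
  invmx (X^T *m X + lambda%:M).

Definition ridge_obj (N M : nat) (X : 'M[R]_(N, M)) (Y : 'cV[R]_N) (x : 'cV[R]_M)
  (lambda y : R) (theta : 'cV[R]_M) : R :=
  \sum_(n < N) (Y n 0 - (X *m theta) n 0) ^+ 2 + (y - dotc theta x) ^+ 2
  + lambda * dotc theta theta.

Definition Klam N M (X : 'M[R]_(N, M)) (x : 'cV[R]_M) lambda : R :=
  1 + dotc x (Plam X lambda *m x).

Definition theta_lam N M (X : 'M[R]_(N, M)) (Y : 'cV[R]_N) lambda : 'cV[R]_M :=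
  Plam X lambda *m X^T *m Y.

Definition Dlam N M (X : 'M[R]_(N, M)) (x : 'cV[R]_M) lambda : R :=
  1 + lambda * dotc x (Plam X lambda *m Plam X lambda *m x).

Definition mu_hat N M (X : 'M[R]_(N, M)) Y (x : 'cV[R]_M) lambda : R :=
  lambda * Klam X x lambda * dotc (theta_lam X Y lambda) (Plam X lambda *m x)
  / Dlam X x lambda.

Definition sigma2_hat N M (X : 'M[R]_(N, M)) (x : 'cV[R]_M) lambda sigma : R :=
  sigma ^+ 2 * Klam X x lambda ^+ 2 / Dlam X x lambda.

Definition c_const N M (X : 'M[R]_(N, M)) Y (x : 'cV[R]_M) lambda sigma : R :=
  expR ((2 * sigma ^+ 2)^-1 *
    ((lambda * dotc (theta_lam X Y lambda) (Plam X lambda *m x)) ^+ 2 / Dlam X x lambda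
     - lambda * dotc (theta_lam X Y lambda) (theta_lam X Y lambda))).

End Defs.

(* Main.v *)
Require Import Defs.
From HB Require Import structures.
From mathcomp Require Import all_boot all_order all_algebra.
From mathcomp Require Import all_classical all_reals all_analysis.
From mathcomp Require Import ring lra.
Import Order.TTheory GRing.Theory Num.Theory.
Local Open Scope ring_scope.

Section H.
Context {R : realType}.

Lemma dotcE {M : nat} (u v : 'cV[R]_M) : dotc u v = \sum_i u i 0 * v i 0.
Proof. by rewrite /dotc mxE; apply: eq_bigr => i _; rewrite mxE. Qed.

Lemma dotcC {M : nat} (u v : 'cV[R]_M) : dotc u v = dotc v u.
Proof. by rewrite !dotcE; apply: eq_bigr => i _; rewrite mulrC. Qed.

Lemma dotcDr {M : nat} (u v w : 'cV[R]_M) : dotc u (v + w) = dotc u v + dotc u w.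
Proof. by rewrite !dotcE -big_split; apply: eq_bigr => i _; rewrite mxE mulrDr. Qed.

Lemma dotcBr {M : nat} (u v w : 'cV[R]_M) : dotc u (v - w) = dotc u v - dotc u w.
Proof. rewrite !dotcE -sumrB; apply: eq_bigr => i _; rewrite !mxE mulrBr //. Qed.

Lemma dotcZr {M : nat} a (u v : 'cV[R]_M) : dotc u (a *: v) = a * dotc u v.
Proof. rewrite !dotcE mulr_sumr; apply: eq_bigr => i _; rewrite mxE; ring. Qed.

Lemma dotcDl {M : nat} (u v w : 'cV[R]_M) : dotc (v + w) u = dotc v u + dotc w u.
Proof. by rewrite dotcC dotcDr !(dotcC u). Qed.
Lemma dotcBl {M : nat} (u v w : 'cV[R]_M) : dotc (v - w) u = dotc v u - dotc w u.
Proof. by rewrite dotcC dotcBr !(dotcC u). Qed.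
Lemma dotcZl {M : nat} a (u v : 'cV[R]_M) : dotc (a *: v) u = a * dotc v u.
Proof. by rewrite dotcC dotcZr dotcC. Qed.

Lemma dotc_mull {N M : nat} (A : 'M[R]_(N, M)) u v : dotc (A *m u) v = dotc u (A^T *m v).
Proof. by rewrite /dotc trmx_mul mulmxA. Qed.

Lemma dotc_ge0 {M : nat} (u : 'cV[R]_M) : 0 <= dotc u u.
Proof. rewrite dotcE; apply: sumr_ge0 => i _; rewrite -expr2; exact: sqr_ge0. Qed.

Lemma dotc_eq0 {M : nat} (u : 'cV[R]_M) : dotc u u = 0 -> u = 0.
Proof.
rewrite dotcE => h; apply/matrixP => i j; rewrite (ord1 j) mxE.
have H : forall k, u k 0 * u k 0 = 0.
  move=> k; apply: (psumr_eq0P (P := xpredT) (F := fun i => u i 0 * u i 0)) => //.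
  by move=> l _; rewrite -expr2 sqr_ge0.
by apply/eqP; rewrite -sqrf_eq0 expr2 H.
Qed.


Lemma Asym {N M : nat} (X : 'M[R]_(N, M)) (l : R) : (X^T *m X + l%:M)^T = X^T *m X + l%:M.
Proof. by rewrite linearD /= trmx_mul trmxK tr_scalar_mx. Qed.

Lemma quadA {N M : nat} (X : 'M[R]_(N, M)) (l : R) v :
  dotc v ((X^T *m X + l%:M) *m v) = dotc (X *m v) (X *m v) + l * dotc v v.
Proof. by rewrite mulmxDl dotcDr mul_scalar_mx dotcZr -mulmxA -dotc_mull. Qed.

Lemma Aunit {N M : nat} (X : 'M[R]_(N, M)) (l : R) : 0 < l -> (X^T *m X + l%:M) \in unitmx.
Proof.
move=> hl; rewrite -row_free_unit -kermx_eq0; apply/eqP.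
set A := X^T *m X + l%:M.
have key : forall v : 'cV[R]_M, A *m v = 0 -> v = 0.
  move=> v hv; apply: dotc_eq0.
  have := quadA X l v; rewrite -/A hv.
  have -> : dotc v 0 = 0 by rewrite dotcE big1 // => i _; rewrite mxE mulr0.
  move=> h; have h1 := dotc_ge0 (X *m v); have h2 := dotc_ge0 v.
  by apply/eqP; rewrite eq_le h2 andbT; nra.
apply/row_matrixP => i; rewrite row0.
have h : row i (kermx A) *m A = 0 by rewrite -row_mul mulmx_ker row0.
apply: trmx_inj; rewrite trmx0; apply: key.
have As : A^T = A by exact: Asym.
by rewrite -{1}As -trmx_mul h trmx0.
Qed.

Lemma Psym {N M : nat} (X : 'M[R]_(N, M)) (l : R) : (Plam X l)^T = Plam X l.
Proof. by rewrite /Plam trmx_inv Asym. Qed.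

Lemma quadA2 {N M : nat} (X : 'M[R]_(N, M)) (l : R) u v :
  dotc u ((X^T *m X + l%:M) *m v) = dotc (X *m u) (X *m v) + l * dotc u v.
Proof. by rewrite mulmxDl dotcDr mul_scalar_mx dotcZr -mulmxA -dotc_mull. Qed.

Lemma robjE {N M : nat} (X : 'M[R]_(N, M)) Y x l y th :
  ridge_obj X Y x l y th = dotc (Y - X *m th) (Y - X *m th) + (y - dotc th x) ^+ 2 + l * dotc th th.
Proof. rewrite /ridge_obj [dotc (Y - _) _]dotcE; congr (_ + _ + _); apply: eq_bigr => i _; by rewrite !mxE expr2. Qed.

Lemma dotc0r {M : nat} (u : 'cV[R]_M) : dotc u 0 = 0.
Proof. by rewrite dotcE big1 // => i _; rewrite mxE mulr0. Qed.

Lemma quadB {M : nat} (Z W : 'cV[R]_M) t :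
  dotc (Z - t *: W) (Z - t *: W) = dotc Z Z - 2 * t * dotc Z W + t ^+ 2 * dotc W W.
Proof. rewrite !(dotcBl, dotcBr, dotcZl, dotcZr) (dotcC W Z); ring. Qed.

Lemma quadD {M : nat} (Z W : 'cV[R]_M) t :
  dotc (Z + t *: W) (Z + t *: W) = dotc Z Z + 2 * t * dotc Z W + t ^+ 2 * dotc W W.
Proof. rewrite !(dotcDl, dotcDr, dotcZl, dotcZr) (dotcC W Z); ring. Qed.

Lemma linD {M : nat} (Z W x : 'cV[R]_M) t :
  dotc (Z + t *: W) x = dotc Z x + t * dotc W x.
Proof. by rewrite dotcDl dotcZl. Qed.

End H.

Theorem lemma1 (R : realType) (N M : nat) (X : 'M[R]_(N, M)) (Y : 'cV[R]_N)
  (x : 'cV[R]_M) (lambda sigma : R) (hlambda : 0 < lambda) (hsigma : 0 < sigma)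
  (y : R) (theta_y : 'cV[R]_M)
  (hmin : forall theta : 'cV[R]_M,
            ridge_obj X Y x lambda y theta_y <= ridge_obj X Y x lambda y theta) :
  gauss_density sigma theta_y y x * luck lambda sigma theta_y =
  c_const X Y x lambda sigma / Num.sqrt (2 * pi * sigma ^+ 2) *
  expR (- ((2 * sigma2_hat X x lambda sigma)^-1 *
           (y - dotc (theta_lam X Y lambda) x + mu_hat X Y x lambda) ^+ 2)).
Proof.
set A := X^T *m X + lambda%:M.
have hA : A \in unitmx by exact: Aunit.
set P := Plam X lambda.
have PA : P *m A = 1%:M by exact: mulVmx.
have AP : A *m P = 1%:M by exact: mulmxV.
have Ps : P^T = P by exact: Psym.
set b := X^T *m Y.
set e := y - dotc theta_y x.
set g := A *m theta_y - b - e *: x.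
have lin : dotc g g = - dotc (Y - X *m theta_y) (X *m g) - e * dotc g x
                      + lambda * dotc theta_y g.
  have gdef : g = A *m theta_y - b - e *: x by [].
  rewrite {2}gdef dotcBr dotcBr quadA2 dotcZr /b -dotc_mull.
  rewrite [dotc (Y - _) _]dotcBl (dotcC Y) (dotcC (X *m theta_y)) (dotcC theta_y g).
  ring.
have expand : forall t, ridge_obj X Y x lambda y (theta_y + t *: g) =
   ridge_obj X Y x lambda y theta_y + 2 * t * dotc g g
   + t ^+ 2 * (dotc (X *m g) (X *m g) + dotc g x ^+ 2 + lambda * dotc g g).
  move=> t; rewrite !robjE mulmxDr -scalemxAr.
  have -> : Y - (X *m theta_y + t *: (X *m g)) = (Y - X *m theta_y) - t *: (X *m g).
    by rewrite opprD addrA.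
  rewrite quadB quadD linD lin (dotcC (Y - _)) /e; ring.
have G0 : dotc g g = 0.
  set G := dotc g g.
  set q := dotc (X *m g) (X *m g) + dotc g x ^+ 2 + lambda * dotc g g.
  have q0 : 0 <= q.
    have := dotc_ge0 (X *m g); have := dotc_ge0 g; have := sqr_ge0 (dotc g x).
    rewrite /q -/G => ? ? ?; nra.
  have := hmin (theta_y + (- G / (q + 1)) *: g); rewrite expand -/G -/q.
  have hq1 : q + 1 != 0 by rewrite gt_eqF // ltr_wpDl.
  move=> h.
  have h2 : 0 <= 2 * (- G / (q + 1)) * G + (- G / (q + 1)) ^+ 2 * q by lra.
  have h3 : 0 <= - G ^+ 2 * (q + 2) / (q + 1) ^+ 2.
    by move: h2; congr (_ <= _); field.
  have h4 : 0 < (q + 1) ^+ 2 by rewrite exprn_gt0 // ltr_wpDl.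
  have h5 : 0 <= - G ^+ 2 * (q + 2).
    by have := mulr_ge0 h3 (ltW h4); rewrite divfK // gt_eqF.
  have := sqr_ge0 G; have := dotc_ge0 g; rewrite -/G => ? ?.
  nra.
have g0 : g = 0 by exact: dotc_eq0.
have Ath : A *m theta_y = b + e *: x.
  by apply/eqP; rewrite -subr_eq0 opprD addrA; apply/eqP.
have thy : theta_y = theta_lam X Y lambda + e *: (P *m x).
  rewrite -[theta_y]mul1mx -PA -mulmxA Ath mulmxDr scalemxAr /theta_lam -mulmxA //.
set th := theta_lam X Y lambda.
set k := dotc x (P *m x).
have k0 : 0 <= k.
  have -> : k = dotc (P *m x) (A *m (P *m x)) by rewrite mulmxA AP mul1mx dotcC.
  rewrite quadA; have := dotc_ge0 (X *m (P *m x)); have := dotc_ge0 (P *m x).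
  move=> ? ?; nra.
set s := dotc (P *m x) (P *m x).
have s0 : 0 <= s by exact: dotc_ge0.
have Ds : Dlam X x lambda = 1 + lambda * s.
  by rewrite /Dlam -/P -mulmxA -{1}Ps -dotc_mull.
have h : dotc theta_y x = dotc th x + e * k by rewrite {1}thy linD (dotcC (P *m x)).
have he : e = y - dotc theta_y x by [].
have eK : y - dotc th x = e * (1 + k) by lra.
rewrite /gauss_density /luck /c_const /sigma2_hat /mu_hat Ds -/e -/th eK /Klam -/P -/k.
rewrite thy quadD.
rewrite -/th -/s.
set t := dotc th (P *m x).
set n := dotc th th.
set sq := Num.sqrt _.
rewrite -[LHS]mulrA -(@expRD R) [RHS]mulrAC -(@expRD R) [LHS]mulrC.
congr (expR _ * _).
have hK : 1 + k != 0 by rewrite gt_eqF // ltr_wpDr.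
have hD : 1 + lambda * s != 0 by rewrite gt_eqF // ltr_wpDr // mulr_ge0 // ltW.
have hs : sigma != 0 by rewrite gt_eqF.
field.
by rewrite hK hD hs.
Qed.
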